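(* Let $a_1,\ldots,a_k\in\mathbb R^d$ be orthonormal vectors and $u_1,\ldots,u_k\in\mathbb R^d$ unit vectors with $\|u_i-a_i\|_2^2\le\epsilon$ for all $i$. Let $U$ be the $d\times k$ matrix with $i$-th column $u_i$, let $U=X\Sigma Y$ be its singular value decomposition, and let $\tilde u_i=X\Sigma^{-1}X^\top u_i$. Then for any $\delta\in(0,1]$, for at least a $1-\delta$ fraction of $i\in[k]$, $\langle u_i,\tilde u_i\rangle\ge 1-\epsilon/(2\delta)$.
   Context: The singular value decomposition is the compact one: $X$ is $d\times k$ with orthonormal columns, $\Sigma$ is $k\times k$ diagonal with positive entries (so $U$ is assumed to have full column rank), and $Y$ is $k\times k$ orthogonal. *)

(* Defs.v *)
From mathcomp Require Import all_boot all_order all_algebra.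
Set Implicit Arguments. Unset Strict Implicit. Unset Printing Implicit Defensive.
Import Order.TTheory GRing.Theory Num.Theory.
Local Open Scope ring_scope.

Definition dotc (R : ringType) (d : nat) (x y : 'cV[R]_d) : R :=
  \sum_(j < d) x j 0 * y j 0.

Definition sqnorm (R : ringType) (d : nat) (x : 'cV[R]_d) : R := dotc x x.

(* Main.v *)
Require Import Defs.
From mathcomp Require Import all_boot all_order all_algebra.
From mathcomp Require Import ring lra.
Import Order.TTheory GRing.Theory Num.Theory.
Local Open Scope ring_scope.

Lemma col_mulmx {R : comNzRingType} {m n p} (A : 'M[R]_(m, n)) (B : 'M[R]_(n, p)) i :
  col i (A *m B) = A *m col i B.
Proof. by rewrite !colE mulmxA. Qed.

Lemma dotc_col {R : comNzRingType} {d k k'} (M : 'M[R]_(d, k)) (N : 'M[R]_(d, k')) i j :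
  dotc (col i M) (col j N) = (M^T *m N) i j.
Proof. rewrite /dotc !mxE; apply: eq_bigr => l _; by rewrite !mxE. Qed.

Lemma sqnorm_ge0 {R : realFieldType} {d} (x : 'cV[R]_d) : 0 <= sqnorm x.
Proof. rewrite /sqnorm /dotc; apply: sumr_ge0 => j _; by rewrite -expr2 sqr_ge0. Qed.

Lemma sqnormB {R : realFieldType} {d} (x y : 'cV[R]_d) :
  sqnorm (x - y) = sqnorm x - 2 * dotc x y + sqnorm y.
Proof.
rewrite /sqnorm /dotc mulr_sumr -sumrB -big_split /=; apply: eq_bigr => j _.
rewrite !mxE; ring.
Qed.

Lemma dot_le1 {R : realFieldType} {d} (x y : 'cV[R]_d) :
  sqnorm x = 1 -> sqnorm y = 1 -> dotc x y <= 1.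
Proof.
move=> hx hy; have := sqnorm_ge0 (x - y); rewrite sqnormB hx hy; lra.
Qed.

Lemma id_ii {R : nzRingType} {n} (i : 'I_n) : (1%:M : 'M[R]_n) i i = 1.
Proof. by rewrite mxE eqxx. Qed.

Theorem mainTheorem11 (R : realFieldType) (d k : nat)
  (A U : 'M[R]_(d, k)) (eps : R)
  (hA : A^T *m A = 1%:M)
  (hU : forall i : 'I_k, sqnorm (col i U) = 1)
  (hclose : forall i : 'I_k, sqnorm (col i U - col i A) <= eps)
  (X : 'M[R]_(d, k)) (s : 'rV[R]_k) (Y : 'M[R]_k)
  (hX : X^T *m X = 1%:M)
  (hs : forall i : 'I_k, 0 < s 0 i)
  (hY : Y^T *m Y = 1%:M)
  (hSVD : U = X *m diag_mx s *m Y)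
  (delta : R) (hd0 : 0 < delta) (hd1 : delta <= 1) :
  let ut (i : 'I_k) : 'cV[R]_d :=
    X *m invmx (diag_mx s) *m X^T *m col i U in
  (1 - delta) * k%:R <=
    #|[set i : 'I_k | 1 - eps / (2 * delta) <= dotc (col i U) (ut i)]|%:R.
Proof.
cbv zeta.
pose ut (i : 'I_k) : 'cV[R]_d := X *m invmx (diag_mx s) *m X^T *m col i U.
have hYY : Y *m Y^T = 1%:M by apply: mulmx1C.
have hunit : diag_mx s \in unitmx.
  rewrite unitmxE det_diag unitfE; apply/prodf_neq0 => i _.
  by rewrite gt_eqF.
have hXU : X^T *m U = diag_mx s *m Y by rewrite hSVD !mulmxA hX mul1mx.
set Q := X *m Y.
have hut : forall i, ut i = col i Q.
  move=> i; rewrite /ut -!col_mulmx -!mulmxA hXU (mulmxA (invmx _)).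
  by rewrite mulVmx // mul1mx.
set W := Y^T *m diag_mx s *m Y.
have hUQ : U^T *m Q = W.
  by rewrite /Q mulmxA -(trmxK X) -trmx_mul hXU trmx_mul tr_diag_mx /W.
have hW : forall i, dotc (col i U) (ut i) = W i i.
  by move=> i; rewrite hut dotc_col hUQ.
have hQQ : Q^T *m Q = 1%:M.
  by rewrite /Q trmx_mul mulmxA -(mulmxA Y^T) hX mulmx1 hY.
have ht0 : forall i, 0 <= 1 - W i i.
  move=> i; rewrite -hW hut subr_ge0; apply: dot_le1; first exact: hU.
  by rewrite /sqnorm dotc_col hQQ id_ii.
have htrW : \sum_i W i i = \sum_i s 0 i.
  rewrite -mxtrace_diag -[\sum_i W i i]/(\tr W) /W mxtrace_mulC mulmxA hYY.
  by rewrite mul1mx.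
have htrA : \sum_i (U^T *m A) i i <= \sum_i s 0 i.
  have -> : \sum_i (U^T *m A) i i = \tr (Y *m A^T *m X *m diag_mx s).
    rewrite -[\sum_i _]/(\tr _) -mxtrace_tr trmx_mul trmxK hSVD.
    by rewrite !mulmxA mxtrace_mulC !mulmxA.
  rewrite /mxtrace; apply: ler_sum => j _.
  rewrite mul_mx_diag mxE -[X in _ <= X]mul1r ler_pM2r //.
  have -> : (Y *m A^T *m X) j j = dotc (col j (A *m Y^T)) (col j X).
    by rewrite dotc_col trmx_mul trmxK.
  apply: dot_le1; last by rewrite /sqnorm dotc_col hX id_ii.
  rewrite /sqnorm dotc_col trmx_mul trmxK mulmxA -(mulmxA Y) hA mulmx1 hYY.
  by rewrite id_ii.
have hsum : \sum_i (1 - W i i) <= k%:R * eps / 2.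
  have h1 : forall i : 'I_k, 2 - 2 * (U^T *m A) i i <= eps.
    move=> i; have := hclose i; rewrite sqnormB hU dotc_col.
    rewrite /sqnorm dotc_col hA id_ii => h; lra.
  have h2 : \sum_(i < k) (2 - 2 * (U^T *m A) i i) <= \sum_(i < k) eps.
    by apply: ler_sum => i _; apply: h1.
  rewrite sumrB -mulr_sumr !sumr_const !card_ord in h2.
  rewrite -[2 *+ k]mulr_natr -[eps *+ k]mulr_natr in h2.
  rewrite sumrB sumr_const card_ord htrW.
  have h4 : 2 * k%:R - 2 * (\sum_i s 0 i) <= eps * k%:R.
    apply: le_trans h2; rewrite lerD2l lerN2; apply: ler_wpM2l => //; exact: htrA.
  move: h4; generalize (\sum_i s 0 i) => b h4.
  lra.
have -> : [set i : 'I_k | 1 - eps / (2 * delta) <=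
      dotc (col i U) (X *m invmx (diag_mx s) *m X^T *m col i U)]
    = [set i | 1 - eps / (2 * delta) <= W i i].
  by apply/setP => i; rewrite !inE -hW.
set S := [set i | 1 - eps / (2 * delta) <= W i i].
case: (posnP k) => [k0|kpos].
  have -> : k%:R = 0 :> R by rewrite k0.
  by rewrite mulr0 ler0n.
have eps0 : 0 <= eps.
  apply: le_trans (hclose (Ordinal kpos)); exact: sqnorm_ge0.
have hcard : #|S|%:R = \sum_i (if i \in S then 1 else 0 : R).
  rewrite -sum1_card natr_sum big_mkcond /=; apply: eq_bigr => i _.
  by case: (i \in S).
set e := eps / (2 * delta).
have he : eps = 2 * delta * e by rewrite /e; field; rewrite gt_eqF.
case: (ltrgt0P eps) => [epos|eneg|ezero].
- have hkey : forall i, eps * (1 - (if i \in S then 1 else 0)) <= 2 * delta * (1 - W i i).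
    move=> i; case: ifP => hi.
      by rewrite subrr mulr0 mulr_ge0 // mulr_ge0 // ltW.
    rewrite subr0 mulr1 he; apply: ltW; rewrite ltr_pM2l; last first.
      by rewrite mulr_gt0.
    move: hi; rewrite inE -/e => /negbT; rewrite -ltNge => hi.
    rewrite ltrBrDl -ltrBrDr //. 
  have : \sum_i eps * (1 - (if i \in S then 1 else 0)) <= \sum_i 2 * delta * (1 - W i i) by apply: ler_sum => i _; exact: hkey.
  rewrite -!mulr_sumr sumrB -hcard sumr_const card_ord.
  move=> h; have h' : eps * (k%:R - #|S|%:R) <= eps * (delta * k%:R).
    apply: le_trans h _; rewrite -[1 *+ k]/(k%:R).
    have : 2 * delta * (\sum_i (1 - W i i)) <= 2 * delta * (k%:R * eps / 2).
      by rewrite ler_pM2l ?mulr_gt0.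
    move=> h2; apply: le_trans h2 _.
    have -> : 2 * delta * (k%:R * eps / 2) = eps * (delta * k%:R) by field.
    by [].
  rewrite ler_pM2l // in h'.
  lra.
- by move: eps0; rewrite leNgt eneg.
- have ht : forall i, 1 - W i i = 0.
    move=> i; apply: (psumr_eq0P (P := xpredT) (fun i _ => ht0 i)) => //.
    apply/eqP; rewrite eq_le sumr_ge0 ?andbT; last by move=> j _; apply: ht0.
    by move: hsum; rewrite ezero mulr0 mul0r.
  have -> : S = [set: 'I_k].
    apply/setP => i; rewrite !inE /e ezero mul0r.
    by have := ht i; lra.
  rewrite cardsT card_ord.
  have : 0 <= delta * k%:R by rewrite mulr_ge0 // ltW.
  lra.
Qed.
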